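(* For every sequent $\Gamma\Rightarrow\Delta$: if $\Gamma\Rightarrow\Delta$ is provable in $\mathsf{Grz}_\infty+\mathsf{cut}$, then $\Gamma\Rightarrow\Delta$ is provable in $\mathsf{Grz}_\infty$.
   Context: Formulas are built from $\bot$ and atomic propositions $p$ using $\to$ and the unary modality $\Box$. A sequent is an expression $\Gamma\Rightarrow\Delta$ where $\Gamma,\Delta$ are finite multisets of formulas; for a multiset $\Pi=A_1,\dots,A_n$, $\Box\Pi$ denotes $\Box A_1,\dots,\Box A_n$. The sequent calculus $\mathsf{Grz}_\infty$ has initial sequents $\Gamma,p\Rightarrow p,\Delta$ ($p$ atomic) and $\Gamma,\bot\Rightarrow\Delta$, and the rules: $(\to_L)$ from $\Gamma,B\Rightarrow\Delta$ and $\Gamma\Rightarrow A,\Delta$ infer $\Gamma,A\to B\Rightarrow\Delta$; $(\to_R)$ from $\Gamma,A\Rightarrow B,\Delta$ infer $\Gamma\Rightarrow A\to B,\Delta$; $(\mathsf{refl})$ from $\Gamma,B,\Box B\Rightarrow\Delta$ infer $\Gamma,\Box B\Rightarrow\Delta$; $(\Box)$ from the left premise $\Gamma,\Box\Pi\Rightarrow A,\Delta$ and the right premise $\Box\Pi\Rightarrow A$ infer $\Gamma,\Box\Pi\Rightarrow\Box A,\Delta$. The system $\mathsf{Grz}_\infty+\mathsf{cut}$ additionally has the rule $(\mathsf{cut})$: from $\Gamma\Rightarrow A,\Delta$ and $\Gamma,A\Rightarrow\Delta$ infer $\Gamma\Rightarrow\Delta$. An $\infty$-proof in one of these systems is a possibly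 infinite tree whose nodes are labelled by sequents, built according to the rules of the system, whose leaves are labelled by initial sequents, and such that every infinite branch passes through a right premise of the rule $(\Box)$ infinitely many times. A sequent is provable in the system if there is an $\infty$-proof with root labelled by it. *)

(* Defs.v *)
From Stdlib Require Import List Permutation.
Import ListNotations.

Inductive form : Type :=
| Bot : form
| Var : nat -> form
| Imp : form -> form -> form
| Box : form -> form.

(* A sequent Gamma => Delta; multisets are represented by lists,
   and all rules are matched up to permutation (multiset equality). *)
Definition sequent : Type := (list form * list form)%type.

Inductive rule : Type := RInit | RImpL | RImpR | RRefl | RBox | RCut.

Definition arity (r : rule) : nat :=
  match r with
  | RInit => 0 | RImpL => 2 | RImpR => 1 | RRefl => 1 | RBox => 2 | RCut => 2
  end.

(* [rule_inst withcut s r ps]: s follows by rule r from the premises ps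
   (in order; for RBox, the premise at index 1 is the right premise). *)
Definition rule_inst (withcut : bool) (s : sequent) (r : rule) (ps : list sequent) : Prop :=
  let (G, D) := s in
  match r with
  | RInit => ps = [] /\
      ((exists p G0 D0, Permutation G (Var p :: G0) /\ Permutation D (Var p :: D0))
       \/ (exists G0, Permutation G (Bot :: G0)))
  | RImpL => exists A B G0, Permutation G (Imp A B :: G0) /\
      ps = [(B :: G0, D); (G0, A :: D)]
  | RImpR => exists A B D0, Permutation D (Imp A B :: D0) /\
      ps = [(A :: G, B :: D0)]
  | RRefl => exists B G0, Permutation G (Box B :: G0) /\
      ps = [(B :: Box B :: G0, D)]
  | RBox => exists Pi A G0 D0, Permutation G (map Box Pi ++ G0) /\
      Permutation D (Box A :: D0) /\
      ps = [(G, A :: D0); (map Box Pi, [A])]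
  | RCut => withcut = true /\ exists A, ps = [(G, A :: D); (A :: G, D)]
  end.

(* A possibly infinite tree: nodes addressed by reversed lists of child
   indices; T w gives the sequent label and rule applied at node w. *)
Definition ptree : Type := list nat -> (sequent * rule).

Inductive in_tree (T : ptree) : list nat -> Prop :=
| in_root : in_tree T []
| in_child : forall w i, in_tree T w -> i < arity (snd (T w)) -> in_tree T (i :: w).

Fixpoint branch (f : nat -> nat) (n : nat) : list nat :=
  match n with
  | 0 => []
  | S m => f m :: branch f m
  end.

Definition locally_correct (withcut : bool) (T : ptree) : Prop :=
  forall w, in_tree T w ->
    rule_inst withcut (fst (T w)) (snd (T w))
      (map (fun i => fst (T (i :: w))) (seq 0 (arity (snd (T w))))).

Definition progressing (T : ptree) : Prop :=
  forall f : nat -> nat, (forall n, in_tree T (branch f n)) ->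
    forall n, exists m, n <= m /\ snd (T (branch f m)) = RBox /\ f m = 1.

Definition inf_proof (withcut : bool) (T : ptree) : Prop :=
  locally_correct withcut T /\ progressing T.

Definition provable (withcut : bool) (s : sequent) : Prop :=
  exists T : ptree, inf_proof withcut T /\ fst (T []) = s.

(* Main.v *)
Require Import Defs.
From Stdlib Require Import List Permutation Lia Arith Classical ClassicalEpsilon.
Import ListNotations.

Definition form_eq_dec : forall x y : form, {x = y} + {x <> y}.
Proof. decide equality; apply Nat.eq_dec. Qed.

Ltac psolve :=
  apply (proj2 (Permutation_count_occ form_eq_dec _ _));
  let x := fresh "x" in intro x;
  repeat match goal with H : Permutation _ _ |- _ =>
    let h := fresh "hc" in pose proof (proj1 (Permutation_count_occ form_eq_dec _ _) H x) as h; clear H end;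
  repeat progress (simpl in *; rewrite ?count_occ_app in * );
  repeat match goal with
   | |- context [form_eq_dec ?a ?b] => destruct (form_eq_dec a b)
   | H : context [form_eq_dec ?a ?b] |- _ => destruct (form_eq_dec a b)
  end; subst; try congruence; lia.


Lemma perm_split (x y : form) L M : Permutation (x :: L) (y :: M) ->
  (x = y /\ Permutation L M) \/ (exists K, Permutation L (y :: K) /\ Permutation M (x :: K)).
Proof.
  intro H. destruct (form_eq_dec x y) as [->|n].
  - left; split; auto. eapply Permutation_cons_inv; eauto.
  - right. assert (Hi : In x M).
    { assert (Hx : In x (y :: M)) by (eapply Permutation_in; eauto; left; auto).
      destruct Hx; [congruence|auto]. }
    apply in_split in Hi as (M1 & M2 & ->). exists (M1 ++ M2). split.
    + apply Permutation_cons_inv with x. psolve.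
    + psolve.
Qed.

Lemma perm_split_neq (x y : form) L M : Permutation (x :: L) (y :: M) -> x <> y ->
  exists K, Permutation L (y :: K) /\ Permutation M (x :: K).
Proof. intros H n. destruct (perm_split _ _ _ _ H) as [[e _]|h]; [congruence|exact h]. Qed.

Lemma perm_split_box x L Pi M : Permutation (x :: L) (map Box Pi ++ M) ->
  (forall B, x <> Box B) -> exists K, Permutation M (x :: K) /\ Permutation L (map Box Pi ++ K).
Proof.
  intros H nb. assert (Hx : In x (map Box Pi ++ M)) by (eapply Permutation_in; eauto; left; auto).
  apply in_app_or in Hx as [Hx|Hx].
  - apply in_map_iff in Hx as (B & e & _). exfalso; apply (nb B); auto.
  - apply in_split in Hx as (M1 & M2 & ->). exists (M1 ++ M2). split.
    + psolve.
    + apply Permutation_cons_inv with x. psolve.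
Qed.

Inductive I (V : list form -> list form -> Prop) : list form -> list form -> Prop :=
| I_init1 G D p G0 D0 : Permutation G (Var p :: G0) -> Permutation D (Var p :: D0) -> I V G D
| I_init2 G D G0 : Permutation G (Bot :: G0) -> I V G D
| I_impl G D A B G0 : Permutation G (Imp A B :: G0) -> I V (B :: G0) D -> I V G0 (A :: D) -> I V G D
| I_impr G D A B D0 : Permutation D (Imp A B :: D0) -> I V (A :: G) (B :: D0) -> I V G D
| I_refl G D B G0 : Permutation G (Box B :: G0) -> I V (B :: Box B :: G0) D -> I V G D
| I_box G D Pi A G0 D0 : Permutation G (map Box Pi ++ G0) -> Permutation D (Box A :: D0) ->
    I V G (A :: D0) -> V (map Box Pi) [A] -> I V G D.

Section ILemmas.
Variable V : list form -> list form -> Prop.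

Lemma I_perm : forall G D, I V G D -> forall G' D', Permutation G G' -> Permutation D D' -> I V G' D'.
Proof.
  induction 1; intros G' D' h1 h2.
  - apply I_init1 with p G0 D0; psolve.
  - apply I_init2 with G0; psolve.
  - apply I_impl with A B G0; [psolve| apply IHI1; psolve | apply IHI2; psolve].
  - apply I_impr with A B D0; [psolve| apply IHI; psolve].
  - apply I_refl with B G0; [psolve| apply IHI; psolve].
  - apply I_box with Pi A G0 D0; [psolve|psolve| apply IHI; psolve | auto].
Qed.

Ltac ip h := eapply I_perm; [exact h | psolve | psolve].

Lemma I_wk G' D' : forall G D, I V G D -> I V (G' ++ G) (D' ++ D).
Proof.
  induction 1.
  - apply I_init1 with p (G' ++ G0) (D' ++ D0); psolve.
  - apply I_init2 with (G' ++ G0); psolve.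
  - apply I_impl with A B (G' ++ G0); [psolve | ip IHI1 | ip IHI2].
  - apply I_impr with A B (D' ++ D0); [psolve | ip IHI].
  - apply I_refl with B (G' ++ G0); [psolve | ip IHI].
  - apply I_box with Pi A (G' ++ G0) (D' ++ D0); [psolve|psolve| ip IHI | auto].
Qed.

Lemma I_wkL A G D : I V G D -> I V (A :: G) D.
Proof. intro h. exact (I_wk [A] [] _ _ h). Qed.
Lemma I_wkR A G D : I V G D -> I V G (A :: D).
Proof. intro h. exact (I_wk [] [A] _ _ h). Qed.

Lemma inv_impl : forall G D, I V G D -> forall A' B' G0', Permutation G (Imp A' B' :: G0') ->
  I V (B' :: G0') D /\ I V G0' (A' :: D).
Proof.
  induction 1; intros A' B' G0' Hp.
  - assert (Hq : Permutation (Var p :: G0) (Imp A' B' :: G0')) by psolve.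
    destruct (perm_split_neq _ _ _ _ Hq ltac:(discriminate)) as (K & k1 & k2).
    split; [apply I_init1 with p (B' :: K) D0 | apply I_init1 with p K (A' :: D0)]; psolve.
  - assert (Hq : Permutation (Bot :: G0) (Imp A' B' :: G0')) by psolve.
    destruct (perm_split_neq _ _ _ _ Hq ltac:(discriminate)) as (K & k1 & k2).
    split; [apply I_init2 with (B' :: K) | apply I_init2 with K]; psolve.
  - assert (Hq : Permutation (Imp A B :: G0) (Imp A' B' :: G0')) by psolve.
    destruct (perm_split _ _ _ _ Hq) as [[e k]|(K & k1 & k2)].
    + injection e as -> ->. split; [ip H0 | ip H1].
    + destruct (IHI1 A' B' (B :: K)) as [h1 h2]; [psolve|].
      destruct (IHI2 A' B' K) as [h3 h4]; [psolve|].
      split.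
      * apply I_impl with A B (B' :: K); [psolve | ip h1 | ip h3].
      * apply I_impl with A B K; [psolve | ip h2 | ip h4].
  - destruct (IHI A' B' (A :: G0')) as [h1 h2]; [psolve|].
    split.
    + apply I_impr with A B D0; [psolve | ip h1].
    + apply I_impr with A B (A' :: D0); [psolve | ip h2].
  - assert (Hq : Permutation (Box B :: G0) (Imp A' B' :: G0')) by psolve.
    destruct (perm_split_neq _ _ _ _ Hq ltac:(discriminate)) as (K & k1 & k2).
    destruct (IHI A' B' (B :: Box B :: K)) as [h1 h2]; [psolve|].
    split.
    + apply I_refl with B (B' :: K); [psolve | ip h1].
    + apply I_refl with B K; [psolve | ip h2].
  - destruct (IHI A' B' G0' Hp) as [h1 h2].
    assert (Hq : Permutation (Imp A' B' :: G0') (map Box Pi ++ G0)) by psolve.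
    destruct (perm_split_box _ _ _ _ Hq ltac:(discriminate)) as (K & k1 & k2).
    split.
    + apply I_box with Pi A (B' :: K) D0; [psolve | psolve | ip h1 | auto].
    + apply I_box with Pi A K (A' :: D0); [psolve | psolve | ip h2 | auto].
Qed.

Lemma inv_impr : forall G D, I V G D -> forall A' B' D0', Permutation D (Imp A' B' :: D0') ->
  I V (A' :: G) (B' :: D0').
Proof.
  induction 1; intros A' B' D0' Hp.
  - assert (Hq : Permutation (Var p :: D0) (Imp A' B' :: D0')) by psolve.
    destruct (perm_split_neq _ _ _ _ Hq ltac:(discriminate)) as (K & k1 & k2).
    apply I_init1 with p (A' :: G0) (B' :: K); psolve.
  - apply I_init2 with (A' :: G0); psolve.
  - pose proof (IHI1 A' B' D0' Hp) as h1.
    pose proof (IHI2 A' B' (A :: D0') ltac:(psolve)) as h2.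
    apply I_impl with A B (A' :: G0); [psolve | ip h1 | ip h2].
  - assert (Hq : Permutation (Imp A B :: D0) (Imp A' B' :: D0')) by psolve.
    destruct (perm_split _ _ _ _ Hq) as [[e k]|(K & k1 & k2)].
    + injection e as -> ->. ip H0.
    + pose proof (IHI A' B' (B :: K) ltac:(psolve)) as h.
      apply I_impr with A B (B' :: K); [psolve | ip h].
  - pose proof (IHI A' B' D0' Hp) as h.
    apply I_refl with B (A' :: G0); [psolve | ip h].
  - assert (Hq : Permutation (Box A :: D0) (Imp A' B' :: D0')) by psolve.
    destruct (perm_split_neq _ _ _ _ Hq ltac:(discriminate)) as (K & k1 & k2).
    pose proof (IHI A' B' (A :: K) ltac:(psolve)) as h.
    apply I_box with Pi A (A' :: G0) (B' :: K); [psolve | psolve | ip h | auto].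
Qed.

Lemma inv_box : forall G D, I V G D -> forall A' D0', Permutation D (Box A' :: D0') ->
  I V G (A' :: D0').
Proof.
  induction 1; intros A' D0' Hp.
  - assert (Hq : Permutation (Var p :: D0) (Box A' :: D0')) by psolve.
    destruct (perm_split_neq _ _ _ _ Hq ltac:(discriminate)) as (K & k1 & k2).
    apply I_init1 with p G0 (A' :: K); psolve.
  - apply I_init2 with G0; psolve.
  - pose proof (IHI1 A' D0' Hp) as h1.
    pose proof (IHI2 A' (A :: D0') ltac:(psolve)) as h2.
    apply I_impl with A B G0; [psolve | ip h1 | ip h2].
  - assert (Hq : Permutation (Imp A B :: D0) (Box A' :: D0')) by psolve.
    destruct (perm_split_neq _ _ _ _ Hq ltac:(discriminate)) as (K & k1 & k2).
    pose proof (IHI A' (B :: K) ltac:(psolve)) as h.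
    apply I_impr with A B (A' :: K); [psolve | ip h].
  - pose proof (IHI A' D0' Hp) as h.
    apply I_refl with B G0; [psolve | ip h].
  - assert (Hq : Permutation (Box A :: D0) (Box A' :: D0')) by psolve.
    destruct (perm_split _ _ _ _ Hq) as [[e k]|(K & k1 & k2)].
    + injection e as ->. ip H1.
    + pose proof (IHI A' (A :: K) ltac:(psolve)) as h.
      apply I_box with Pi A G0 (A' :: K); [psolve | psolve | ip h | auto].
Qed.

Lemma bot_r : forall G D, I V G D -> forall D0', Permutation D (Bot :: D0') -> I V G D0'.
Proof.
  induction 1; intros D0' Hp.
  - assert (Hq : Permutation (Var p :: D0) (Bot :: D0')) by psolve.
    destruct (perm_split_neq _ _ _ _ Hq ltac:(discriminate)) as (K & k1 & k2).
    apply I_init1 with p G0 K; psolve.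
  - apply I_init2 with G0; psolve.
  - pose proof (IHI1 D0' Hp) as h1.
    pose proof (IHI2 (A :: D0') ltac:(psolve)) as h2.
    apply I_impl with A B G0; [psolve | ip h1 | ip h2].
  - assert (Hq : Permutation (Imp A B :: D0) (Bot :: D0')) by psolve.
    destruct (perm_split_neq _ _ _ _ Hq ltac:(discriminate)) as (K & k1 & k2).
    pose proof (IHI (B :: K) ltac:(psolve)) as h.
    apply I_impr with A B K; [psolve | ip h].
  - pose proof (IHI D0' Hp) as h.
    apply I_refl with B G0; [psolve | ip h].
  - assert (Hq : Permutation (Box A :: D0) (Bot :: D0')) by psolve.
    destruct (perm_split_neq _ _ _ _ Hq ltac:(discriminate)) as (K & k1 & k2).
    pose proof (IHI (A :: K) ltac:(psolve)) as h.
    apply I_box with Pi A G0 K; [psolve | psolve | ip h | auto].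
Qed.

Lemma split2 (X : form) p D0 D0' : Permutation (X :: D0) (Var p :: Var p :: D0') -> X <> Var p ->
  exists K, Permutation D0' (X :: K) /\ Permutation D0 (Var p :: Var p :: K).
Proof.
  intros H n.
  destruct (perm_split_neq _ _ _ _ H n) as (K1 & k1 & k2).
  assert (Hq : Permutation (X :: K1) (Var p :: D0')) by psolve.
  destruct (perm_split_neq _ _ _ _ Hq n) as (K2 & k3 & k4).
  exists K2; split; psolve.
Qed.

Lemma contr_atom_r : forall G D, I V G D -> forall p D0', Permutation D (Var p :: Var p :: D0') ->
  I V G (Var p :: D0').
Proof.
  induction 1; intros q D0' Hp.
  - assert (Hq : Permutation (Var p :: D0) (Var q :: Var q :: D0')) by psolve.
    destruct (perm_split _ _ _ _ Hq) as [[e k]|(K & k1 & k2)].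
    + injection e as ->. apply I_init1 with q G0 D0'; psolve.
    + apply I_init1 with p G0 K; psolve.
  - apply I_init2 with G0; psolve.
  - pose proof (IHI1 q D0' Hp) as h1.
    pose proof (IHI2 q (A :: D0') ltac:(psolve)) as h2.
    apply I_impl with A B G0; [psolve | ip h1 | ip h2].
  - assert (Hq : Permutation (Imp A B :: D0) (Var q :: Var q :: D0')) by psolve.
    destruct (split2 _ _ _ _ Hq ltac:(discriminate)) as (K & k1 & k2).
    pose proof (IHI q (B :: K) ltac:(psolve)) as h.
    apply I_impr with A B (Var q :: K); [psolve | ip h].
  - pose proof (IHI q D0' Hp) as h.
    apply I_refl with B G0; [psolve | ip h].
  - assert (Hq : Permutation (Box A :: D0) (Var q :: Var q :: D0')) by psolve.
    destruct (split2 _ _ _ _ Hq ltac:(discriminate)) as (K & k1 & k2).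
    pose proof (IHI q (A :: K) ltac:(psolve)) as h.
    apply I_box with Pi A G0 (Var q :: K); [psolve | psolve | ip h | auto].
Qed.

End ILemmas.

Lemma I_mono (V V' : list form -> list form -> Prop) : (forall G D, V G D -> V' G D) ->
  forall G D, I V G D -> I V' G D.
Proof.
  intros hv. induction 1.
  - eapply I_init1; eauto.
  - eapply I_init2; eauto.
  - eapply I_impl; eauto.
  - eapply I_impr; eauto.
  - eapply I_refl; eauto.
  - eapply I_box; eauto.
Qed.


Ltac ip h := eapply I_perm; [exact h | psolve | psolve].

Fixpoint boxesOf (l : list form) : list form :=
  match l with [] => [] | Box B :: l' => B :: boxesOf l' | _ :: l' => boxesOf l' end.
Fixpoint nonboxes (l : list form) : list form :=
  match l with [] => [] | Box B :: l' => nonboxes l' | a :: l' => a :: nonboxes l' end.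

Lemma boxes_split G : Permutation G (map Box (boxesOf G) ++ nonboxes G).
Proof. induction G as [|a G IH]; [constructor|]. destruct a; simpl; psolve. Qed.

Lemma boxesOf_app l1 l2 : boxesOf (l1 ++ l2) = boxesOf l1 ++ boxesOf l2.
Proof. induction l1 as [|a l1 IH]; [reflexivity|]. destruct a; simpl; rewrite ?IH; reflexivity. Qed.

Lemma boxesOf_map Pi : boxesOf (map Box Pi) = Pi.
Proof. induction Pi; simpl; congruence. Qed.

Lemma boxesOf_perm l l' : Permutation l l' -> Permutation (boxesOf l) (boxesOf l').
Proof.
  induction 1.
  - constructor.
  - destruct x; simpl; auto.
  - destruct x; destruct y; simpl; try apply Permutation_refl; try constructor.
  - eapply Permutation_trans; eauto.
Qed.

Lemma sub_boxes G Pi G0 : Permutation G (map Box Pi ++ G0) ->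
  Permutation (map Box (boxesOf G)) (map Box Pi ++ map Box (boxesOf G0)).
Proof.
  intro h. apply boxesOf_perm in h. rewrite boxesOf_app, boxesOf_map in h.
  rewrite <- map_app. apply Permutation_map. exact h.
Qed.

Inductive Der (W : list form -> list form -> Prop) : list form -> list form -> Prop :=
| D_hyp G D : W G D -> Der W G D
| D_perm G D G' D' : Der W G D -> Permutation G G' -> Permutation D D' -> Der W G' D'
| D_wk G D G' D' : Der W G D -> Der W (G' ++ G) (D' ++ D)
| D_init1 p G D : Der W (Var p :: G) (Var p :: D)
| D_init2 G D : Der W (Bot :: G) D
| D_impl A B G D : Der W (B :: G) D -> Der W G (A :: D) -> Der W (Imp A B :: G) D
| D_impr A B G D : Der W (A :: G) (B :: D) -> Der W G (Imp A B :: D)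
| D_refl B G D : Der W (B :: Box B :: G) D -> Der W (Box B :: G) D
| D_box Pi A G D : Der W (map Box Pi ++ G) (A :: D) -> Der W (map Box Pi) [A] ->
    Der W (map Box Pi ++ G) (Box A :: D)
| D_cut A G D : Der W G (A :: D) -> Der W (A :: G) D -> Der W G D.

Ltac dp h := eapply D_perm; [exact h | psolve | psolve].

Lemma Der_mono (W W' : list form -> list form -> Prop) : (forall G D, W G D -> W' G D) ->
  forall G D, Der W G D -> Der W' G D.
Proof.
  intros hw. induction 1.
  - apply D_hyp; auto.
  - eapply D_perm; eauto.
  - apply D_wk; auto.
  - apply D_init1.
  - apply D_init2.
  - apply D_impl; auto.
  - apply D_impr; auto.
  - apply D_refl; auto.
  - apply D_box; auto.
  - eapply D_cut; eauto.
Qed.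

Lemma Der_idem W : forall G D, Der (Der W) G D -> Der W G D.
Proof.
  induction 1.
  - auto.
  - eapply D_perm; eauto.
  - apply D_wk; auto.
  - apply D_init1.
  - apply D_init2.
  - apply D_impl; auto.
  - apply D_impr; auto.
  - apply D_refl; auto.
  - apply D_box; auto.
  - eapply D_cut; eauto.
Qed.

Lemma I_Der W : forall G D, I (Der W) G D -> Der W G D.
Proof.
  induction 1.
  - eapply D_perm; [apply (D_init1 W p G0 D0) | psolve | psolve].
  - eapply D_perm; [apply (D_init2 W G0 D) | psolve | psolve].
  - eapply D_perm; [apply (D_impl W A B G0 D); auto | psolve | psolve].
  - eapply D_perm; [apply (D_impr W A B G D0); auto | psolve | psolve].
  - eapply D_perm; [apply (D_refl W B G0 D); auto | psolve | psolve].
  - eapply D_perm; [apply (D_box W Pi A G0 D0); auto; dp IHI | psolve | psolve].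
Qed.

Section Cut.
Variable W : list form -> list form -> Prop.
Notation IW := (I (Der W)).

Lemma cut_atom_gen p : forall GG D, IW GG D -> forall G, Permutation GG (Var p :: G) ->
  IW G (Var p :: D) -> IW G D.
Proof.
  induction 1 as [G D q G0 D0 h1 h2 | G D G0 h1 | G D A1 A2 G0 h1 d1 IH1 d2 IH2
    | G D A1 A2 D0 h1 d1 IH1 | G D C G0 h1 d1 IH1 | G D Pi C G0 D0 h1 h2 d1 IH1 hv];
    intros G' Hp hl.
  - assert (Hq : Permutation (Var q :: G0) (Var p :: G')) by psolve.
    destruct (perm_split _ _ _ _ Hq) as [[e k]|(K & k1 & k2)].
    + injection e as ->.
      assert (hc : IW G' (Var p :: D0)) by (eapply contr_atom_r; [exact hl | psolve]).
      ip hc.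
    + apply I_init1 with q K D0; psolve.
  - assert (Hq : Permutation (Bot :: G0) (Var p :: G')) by psolve.
    destruct (perm_split_neq _ _ _ _ Hq ltac:(discriminate)) as (K & k1 & k2).
    apply I_init2 with K; psolve.
  - assert (Hq : Permutation (Imp A1 A2 :: G0) (Var p :: G')) by psolve.
    destruct (perm_split_neq _ _ _ _ Hq ltac:(discriminate)) as (K & k1 & k2).
    destruct (inv_impl _ _ _ hl A1 A2 K ltac:(psolve)) as [a1 a2].
    pose proof (IH1 (A2 :: K) ltac:(psolve) a1) as r1.
    pose proof (IH2 K ltac:(psolve) ltac:(ip a2)) as r2.
    apply I_impl with A1 A2 K; auto; psolve.
  - pose proof (inv_impr _ _ _ hl A1 A2 (Var p :: D0) ltac:(psolve)) as a.
    pose proof (IH1 (A1 :: G') ltac:(psolve) ltac:(ip a)) as r.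
    apply I_impr with A1 A2 D0; auto.
  - assert (Hq : Permutation (Box C :: G0) (Var p :: G')) by psolve.
    destruct (perm_split_neq _ _ _ _ Hq ltac:(discriminate)) as (K & k1 & k2).
    pose proof (I_wkL _ C _ _ hl) as a.
    pose proof (IH1 (C :: Box C :: K) ltac:(psolve) ltac:(ip a)) as r.
    apply I_refl with C K; auto; psolve.
  - assert (Hq : Permutation (Var p :: G') (map Box Pi ++ G0)) by psolve.
    destruct (perm_split_box _ _ _ _ Hq ltac:(discriminate)) as (K & k1 & k2).
    pose proof (inv_box _ _ _ hl C (Var p :: D0) ltac:(psolve)) as a.
    pose proof (IH1 G' Hp ltac:(ip a)) as r.
    apply I_box with Pi C K D0; auto.
Qed.

Lemma stage2 B (cutB : forall G D, IW G (B :: D) -> IW (B :: G) D -> IW G D)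
  Sigma (hS : Der W (map Box Sigma) [B]) :
  forall GG DD, IW GG DD -> forall G, Permutation GG (Box B :: G) -> IW G (B :: DD) ->
  (exists G1, Permutation G (map Box Sigma ++ G1)) -> IW G DD.
Proof.
  induction 1 as [G D q G0 D0 h1 h2 | G D G0 h1 | G D A1 A2 G0 h1 d1 IH1 d2 IH2
    | G D A1 A2 D0 h1 d1 IH1 | G D C G0 h1 d1 IH1 | G D Pi C G0 D0 h1 h2 d1 IH1 hv];
    intros G' Hp hl [G1 hs].
  - assert (Hq : Permutation (Var q :: G0) (Box B :: G')) by psolve.
    destruct (perm_split_neq _ _ _ _ Hq ltac:(discriminate)) as (K & k1 & k2).
    apply I_init1 with q K D0; psolve.
  - assert (Hq : Permutation (Bot :: G0) (Box B :: G')) by psolve.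
    destruct (perm_split_neq _ _ _ _ Hq ltac:(discriminate)) as (K & k1 & k2).
    apply I_init2 with K; psolve.
  - assert (Hq : Permutation (Imp A1 A2 :: G0) (Box B :: G')) by psolve.
    destruct (perm_split_neq _ _ _ _ Hq ltac:(discriminate)) as (K & k1 & k2).
    destruct (inv_impl _ _ _ hl A1 A2 K ltac:(psolve)) as [a1 a2].
    assert (Hq2 : Permutation (Imp A1 A2 :: K) (map Box Sigma ++ G1)) by psolve.
    destruct (perm_split_box _ _ _ _ Hq2 ltac:(discriminate)) as (K' & k3 & k4).
    pose proof (IH1 (A2 :: K) ltac:(psolve) a1 ltac:(exists (A2 :: K'); psolve)) as r1.
    pose proof (IH2 K ltac:(psolve) ltac:(ip a2) ltac:(exists K'; exact k4)) as r2.
    apply I_impl with A1 A2 K; auto; psolve.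
  - pose proof (inv_impr _ _ _ hl A1 A2 (B :: D0) ltac:(psolve)) as a.
    pose proof (IH1 (A1 :: G') ltac:(psolve) ltac:(ip a) ltac:(exists (A1 :: G1); psolve)) as r.
    apply I_impr with A1 A2 D0; auto.
  - assert (Hq : Permutation (Box C :: G0) (Box B :: G')) by psolve.
    destruct (perm_split _ _ _ _ Hq) as [[e k]|(K & k1 & k2)].
    + injection e as ->.
      pose proof (I_wkL _ B _ _ hl) as a.
      pose proof (IH1 (B :: G') ltac:(psolve) a ltac:(exists (B :: G1); psolve)) as r.
      exact (cutB _ _ hl r).
    + pose proof (I_wkL _ C _ _ hl) as a.
      pose proof (IH1 (C :: Box C :: K) ltac:(psolve) ltac:(ip a)
        ltac:(exists (C :: G1); psolve)) as r.
      apply I_refl with C K; auto; psolve.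
  - pose proof (inv_box _ _ _ hl C (B :: D0) ltac:(psolve)) as a.
    pose proof (IH1 G' Hp ltac:(ip a) ltac:(exists G1; exact hs)) as r.
    apply I_box with (boxesOf G') C (nonboxes G') D0; auto.
    + apply boxes_split.
    + pose proof (sub_boxes _ _ _ hs) as e1.
      assert (V2 : Der W (map Box (boxesOf G')) [B]).
      { pose proof (D_wk W _ _ (map Box (boxesOf G1)) [] hS) as v. dp v. }
      assert (V3 : Der W (map Box (boxesOf G')) [Box B]).
      { pose proof (D_box W Sigma B (map Box (boxesOf G1)) [] ltac:(dp V2) hS) as v. dp v. }
      assert (V4 : Der W (Box B :: map Box (boxesOf G')) [C]).
      { assert (hh : Permutation (Box B :: G') (map Box Pi ++ G0)) by psolve.
        pose proof (sub_boxes _ _ _ hh) as e2. simpl in e2.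
        pose proof (D_wk W _ _ (map Box (boxesOf G0)) [] hv) as v. dp v. }
      apply (D_cut W (Box B)); [|exact V4].
      pose proof (D_wk W _ _ [] [C] V3) as v. dp v.
Qed.

Lemma stage1 B (cutB : forall G D, IW G (B :: D) -> IW (B :: G) D -> IW G D) :
  forall GG DD, IW GG DD -> forall G D, Permutation GG G -> Permutation DD (Box B :: D) ->
  IW (Box B :: G) D -> IW G D.
Proof.
  induction 1 as [G D q G0 D0 h1 h2 | G D G0 h1 | G D A1 A2 G0 h1 d1 IH1 d2 IH2
    | G D A1 A2 D0 h1 d1 IH1 | G D C G0 h1 d1 IH1 | G D Pi C G0 D0 h1 h2 d1 IH1 hv];
    intros G' D' hg hd h2'.
  - assert (Hq : Permutation (Var q :: D0) (Box B :: D')) by psolve.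
    destruct (perm_split_neq _ _ _ _ Hq ltac:(discriminate)) as (K & k1 & k2).
    apply I_init1 with q G0 K; psolve.
  - apply I_init2 with G0; psolve.
  - destruct (inv_impl _ _ _ h2' A1 A2 (Box B :: G0) ltac:(psolve)) as [a1 a2].
    pose proof (IH1 (A2 :: G0) D' ltac:(psolve) hd ltac:(ip a1)) as r1.
    pose proof (IH2 G0 (A1 :: D') ltac:(psolve) ltac:(psolve) a2) as r2.
    apply I_impl with A1 A2 G0; auto; psolve.
  - assert (Hq : Permutation (Imp A1 A2 :: D0) (Box B :: D')) by psolve.
    destruct (perm_split_neq _ _ _ _ Hq ltac:(discriminate)) as (K & k1 & k2).
    pose proof (inv_impr _ _ _ h2' A1 A2 K ltac:(psolve)) as a.
    pose proof (IH1 (A1 :: G') (A2 :: K) ltac:(psolve) ltac:(psolve) ltac:(ip a)) as r.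
    apply I_impr with A1 A2 K; auto; psolve.
  - pose proof (I_wkL _ C _ _ h2') as a.
    pose proof (IH1 (C :: Box C :: G0) D' ltac:(psolve) hd ltac:(ip a)) as r.
    apply I_refl with C G0; auto; psolve.
  - assert (Hq : Permutation (Box C :: D0) (Box B :: D')) by psolve.
    destruct (perm_split _ _ _ _ Hq) as [[e k]|(K & k1 & k2)].
    + injection e as ->.
      eapply (stage2 B cutB Pi hv _ _ h2' G'); [psolve | ip d1 | exists G0; psolve].
    + pose proof (inv_box _ _ _ h2' C K ltac:(psolve)) as a.
      pose proof (IH1 G' (C :: K) hg ltac:(psolve) a) as r.
      apply I_box with Pi C G0 K; auto; psolve.
Qed.

Lemma cut_adm : forall A G D, IW G (A :: D) -> IW (A :: G) D -> IW G D.
Proof.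
  induction A as [| p | A1 IH1 A2 IH2 | B IH]; intros G D h1 h2.
  - eapply bot_r; [exact h1 | apply Permutation_refl].
  - eapply cut_atom_gen; [exact h2 | apply Permutation_refl | exact h1].
  - pose proof (inv_impr _ _ _ h1 A1 A2 D (Permutation_refl _)) as a.
    destruct (inv_impl _ _ _ h2 A1 A2 G (Permutation_refl _)) as [b c].
    pose proof (I_wkL _ A1 _ _ b) as b'.
    pose proof (IH2 (A1 :: G) D a ltac:(ip b')) as r.
    exact (IH1 G D c r).
  - eapply stage1; [exact IH | exact h1 | apply Permutation_refl | apply Permutation_refl | exact h2].
Qed.

End Cut.


Inductive IC (V : list form -> list form -> Prop) : list form -> list form -> Prop :=
| IC_init1 G D p G0 D0 : Permutation G (Var p :: G0) -> Permutation D (Var p :: D0) -> IC V G D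
| IC_init2 G D G0 : Permutation G (Bot :: G0) -> IC V G D
| IC_impl G D A B G0 : Permutation G (Imp A B :: G0) -> IC V (B :: G0) D -> IC V G0 (A :: D) -> IC V G D
| IC_impr G D A B D0 : Permutation D (Imp A B :: D0) -> IC V (A :: G) (B :: D0) -> IC V G D
| IC_refl G D B G0 : Permutation G (Box B :: G0) -> IC V (B :: Box B :: G0) D -> IC V G D
| IC_box G D Pi A G0 D0 : Permutation G (map Box Pi ++ G0) -> Permutation D (Box A :: D0) ->
    IC V G (A :: D0) -> V (map Box Pi) [A] -> IC V G D
| IC_cut G D A : IC V G (A :: D) -> IC V (A :: G) D -> IC V G D.

Lemma IC_I V : forall G D, IC V G D -> I (Der V) G D.
Proof.
  induction 1.
  - eapply I_init1; eauto.
  - eapply I_init2; eauto.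
  - eapply I_impl; eauto.
  - eapply I_impr; eauto.
  - eapply I_refl; eauto.
  - eapply I_box; eauto. apply D_hyp; auto.
  - eapply cut_adm; eauto.
Qed.

Lemma compat V : forall G D, Der (I V) G D -> I (Der V) G D.
Proof.
  induction 1.
  - eapply I_mono; [|eauto]. intros; apply D_hyp; auto.
  - eapply I_perm; eauto.
  - apply I_wk; auto.
  - apply I_init1 with p G D; apply Permutation_refl.
  - apply I_init2 with G; apply Permutation_refl.
  - apply I_impl with A B G; auto; apply Permutation_refl.
  - apply I_impr with A B D; auto; apply Permutation_refl.
  - apply I_refl with B G; auto; apply Permutation_refl.
  - apply I_box with Pi A G D; auto; try apply Permutation_refl. apply I_Der; auto.
  - eapply cut_adm; eauto.
Qed.

Definition GfpI G D := exists X : list form -> list form -> Prop,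
  (forall G D, X G D -> I X G D) /\ X G D.
Definition GfpC G D := exists X : list form -> list form -> Prop,
  (forall G D, X G D -> IC X G D) /\ X G D.

Lemma cut_elim G D : GfpC G D -> GfpI G D.
Proof.
  intros (X & hX & hx). exists (Der X). split; [|apply D_hyp; auto].
  intros G' D' h.
  pose proof (Der_mono _ _ hX _ _ h) as h1.
  pose proof (Der_mono _ _ (IC_I X) _ _ h1) as h2.
  pose proof (compat _ _ _ h2) as h3.
  exact (I_mono _ _ (Der_idem X) _ _ h3).
Qed.


Lemma in_tree_tail T i w : in_tree T (i :: w) -> in_tree T w.
Proof. intro h. inversion h; auto. Qed.

Lemma in_tree_lt T i w : in_tree T (i :: w) -> i < arity (snd (T w)).
Proof. intro h. inversion h; auto. Qed.

Lemma branch_down T f : forall m n, n <= m -> in_tree T (branch f m) -> in_tree T (branch f n).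
Proof.
  induction m; intros n hn h.
  - replace n with 0 by lia. exact h.
  - destruct (Nat.eq_dec n (S m)) as [->|ne]; auto.
    apply IHm; [lia|]. simpl in h. eapply in_tree_tail; eauto.
Qed.

Lemma branch_eq f : forall l, (forall n, n < length l -> f n = nth n (rev l) 0) ->
  branch f (length l) = l.
Proof.
  induction l as [|a l IH]; intro h; [reflexivity|].
  simpl. f_equal.
  - rewrite h by (simpl; lia). simpl. rewrite app_nth2; rewrite length_rev; [|lia].
    rewrite Nat.sub_diag. reflexivity.
  - apply IH. intros n hn. rewrite h by (simpl; lia). simpl. rewrite app_nth1; auto.
    rewrite length_rev; auto.
Qed.

Section TreeToGfp.
Variable T : ptree.
Hypothesis Hlc : locally_correct true T.
Hypothesis Hpr : progressing T.

Definition X (G D : list form) : Prop := exists w, in_tree T w /\ fst (T w) = (G, D).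
Definition good (w : list nat) : Prop := IC X (fst (fst (T w))) (snd (fst (T w))).

Lemma step w G D r : in_tree T w -> T w = ((G, D), r) ->
  (forall i, i < arity r -> ~ (r = RBox /\ i = 1) -> good (i :: w)) -> IC X G D.
Proof.
  intros hw e hc. pose proof (Hlc w hw) as L. rewrite e in L. simpl in L.
  unfold good in hc.
  destruct r; simpl in L.
  - destruct L as [_ [(p & G0 & D0 & h1 & h2) | (G0 & h)]].
    + eapply IC_init1; eauto.
    + eapply IC_init2; eauto.
  - destruct L as (A & B & G0 & hp & ee). injection ee as e0 e1.
    pose proof (hc 0 ltac:(simpl; lia) ltac:(intros [? ?]; discriminate)) as c0.
    pose proof (hc 1 ltac:(simpl; lia) ltac:(intros [? ?]; discriminate)) as c1.
    rewrite e0 in c0. rewrite e1 in c1. eapply IC_impl; eauto.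
  - destruct L as (A & B & D0 & hp & ee). injection ee as e0.
    pose proof (hc 0 ltac:(simpl; lia) ltac:(intros [? ?]; discriminate)) as c0.
    rewrite e0 in c0. eapply IC_impr; eauto.
  - destruct L as (B & G0 & hp & ee). injection ee as e0.
    pose proof (hc 0 ltac:(simpl; lia) ltac:(intros [? ?]; discriminate)) as c0.
    rewrite e0 in c0. eapply IC_refl; eauto.
  - destruct L as (Pi & A & G0 & D0 & hp & hd & ee). injection ee as e0 e1.
    pose proof (hc 0 ltac:(simpl; lia) ltac:(intros [? ?]; discriminate)) as c0.
    rewrite e0 in c0. eapply IC_box; eauto.
    exists (1 :: w). split; auto. apply in_child; auto. rewrite e. simpl; lia.
  - destruct L as (_ & A & ee). injection ee as e0 e1.
    pose proof (hc 0 ltac:(simpl; lia) ltac:(intros [? ?]; discriminate)) as c0.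
    pose proof (hc 1 ltac:(simpl; lia) ltac:(intros [? ?]; discriminate)) as c1.
    rewrite e0 in c0. rewrite e1 in c1. eapply IC_cut; eauto.
Qed.

Definition bad w := in_tree T w /\ ~ good w.

Lemma step_good w : in_tree T w ->
  (forall i, i < arity (snd (T w)) -> ~ (snd (T w) = RBox /\ i = 1) -> good (i :: w)) -> good w.
Proof.
  intros hw hc. unfold good at 1. destruct (T w) as [[G D] r] eqn:e. simpl.
  apply (step w G D r hw e). exact hc.
Qed.

Lemma next w : bad w -> exists i, i < arity (snd (T w)) /\ ~ (snd (T w) = RBox /\ i = 1) /\ bad (i :: w).
Proof.
  intros [hw hg]. apply NNPP. intro hn. apply hg. apply step_good; auto.
  intros i hi hr. apply NNPP. intro hb. apply hn. exists i. repeat split; auto.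
  apply in_child; auto.
Qed.

Definition choose (w : list nat) : nat :=
  epsilon (inhabits 0) (fun i => i < arity (snd (T w)) /\ ~ (snd (T w) = RBox /\ i = 1) /\ bad (i :: w)).

Variable w0 : list nat.
Hypothesis hw0 : bad w0.

Fixpoint c (k : nat) : list nat := match k with 0 => w0 | S k => choose (c k) :: c k end.

Lemma c_bad k : bad (c k) /\ (k > 0 -> forall k', k = S k' ->
   ~ (snd (T (c k')) = RBox /\ choose (c k') = 1)).
Proof.
  induction k.
  - split; auto. intros; lia.
  - destruct IHk as [hb _].
    pose proof (epsilon_spec (inhabits 0) _ (next _ hb)) as (h1 & h2 & h3).
    split; [exact h3|]. intros _ k' e. injection e as ->. exact h2.
Qed.

Lemma c_len k : length (c k) = length w0 + k.
Proof. induction k; simpl; lia. Qed.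

Lemma c_prefix k j : exists e, rev (c (k + j)) = rev (c k) ++ e.
Proof.
  induction j.
  - exists []. rewrite Nat.add_0_r, app_nil_r. reflexivity.
  - destruct IHj as [e he]. rewrite Nat.add_succ_r. simpl. rewrite he.
    exists (e ++ [choose (c (k + j))]). rewrite app_assoc. reflexivity.
Qed.

Definition f (n : nat) : nat := nth n (rev (c (S n))) 0.

Lemma nth_c_mono k j n : k <= j -> n < length (c k) -> nth n (rev (c k)) 0 = nth n (rev (c j)) 0.
Proof.
  intros hk hn. replace j with (k + (j - k)) by lia.
  destruct (c_prefix k (j - k)) as [e he]. rewrite he, app_nth1; auto.
  rewrite length_rev; auto.
Qed.

Lemma f_c k n : n < length (c k) -> f n = nth n (rev (c k)) 0.
Proof.
  intro hn. unfold f.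
  rewrite (nth_c_mono (S n) (max k (S n)) n) by (try lia; rewrite c_len; lia).
  rewrite (nth_c_mono k (max k (S n)) n) by lia. reflexivity.
Qed.

Lemma branch_c k : branch f (length (c k)) = c k.
Proof. apply branch_eq. intros n hn. apply f_c; auto. Qed.

Lemma contra : False.
Proof.
  assert (Hin : forall n, in_tree T (branch f n)).
  { intro n. apply (branch_down T f (length (c n))). rewrite c_len; lia.
    rewrite branch_c. apply (c_bad n). }
  destruct (Hpr f Hin (length w0)) as (m & hm & hr & h1).
  set (k := m - length w0).
  assert (em : m = length (c k)) by (unfold k; rewrite c_len; lia).
  assert (ef : f m = choose (c k)).
  { assert (e2 : branch f (length (c (S k))) = c (S k)) by apply branch_c.
    rewrite c_len in e2. replace (length w0 + S k) with (S m) in e2 by (rewrite em, c_len; lia).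
    simpl in e2. injection e2 as e3 _. exact e3. }
  rewrite em, branch_c in hr. rewrite ef in h1.
  exact (proj2 (c_bad (S k)) ltac:(lia) k eq_refl (conj hr h1)).
Qed.

End TreeToGfp.

Lemma all_good T : locally_correct true T -> progressing T -> forall w, in_tree T w -> good T w.
Proof.
  intros hl hp w hw. apply NNPP. intro hg. exact (contra T hl hp w (conj hw hg)).
Qed.

Lemma tree_to_gfpC G D : provable true (G, D) -> GfpC G D.
Proof.
  intros (T & [hl hp] & hr). exists (X T). split.
  - intros G' D' (w & hw & e). pose proof (all_good T hl hp w hw) as g. unfold good in g.
    rewrite e in g. exact g.
  - exists []. split; [constructor | exact hr].
Qed.


Inductive IN (V : list form -> list form -> Prop) : nat -> list form -> list form -> Prop :=
| IN_init1 n G D p G0 D0 : Permutation G (Var p :: G0) -> Permutation D (Var p :: D0) -> IN V n G D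
| IN_init2 n G D G0 : Permutation G (Bot :: G0) -> IN V n G D
| IN_impl n m1 m2 G D A B G0 : Permutation G (Imp A B :: G0) -> m1 < n -> m2 < n ->
    IN V m1 (B :: G0) D -> IN V m2 G0 (A :: D) -> IN V n G D
| IN_impr n m G D A B D0 : Permutation D (Imp A B :: D0) -> m < n -> IN V m (A :: G) (B :: D0) -> IN V n G D
| IN_refl n m G D B G0 : Permutation G (Box B :: G0) -> m < n -> IN V m (B :: Box B :: G0) D -> IN V n G D
| IN_box n m G D Pi A G0 D0 : Permutation G (map Box Pi ++ G0) -> Permutation D (Box A :: D0) ->
    m < n -> IN V m G (A :: D0) -> V (map Box Pi) [A] -> IN V n G D.

Lemma I_IN V : forall G D, I V G D -> exists n, IN V n G D.
Proof.
  induction 1.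
  - exists 0. eapply IN_init1; eauto.
  - exists 0. eapply IN_init2; eauto.
  - destruct IHI1 as [m1 h1]; destruct IHI2 as [m2 h2].
    exists (S (max m1 m2)). apply IN_impl with m1 m2 A B G0; auto; lia.
  - destruct IHI as [m h]. exists (S m). eapply IN_impr; eauto.
  - destruct IHI as [m h]. exists (S m). eapply IN_refl; eauto.
  - destruct IHI as [m h]. exists (S m). eapply IN_box; eauto.
Qed.

Definition state := (sequent * nat)%type.
Definition dflt : state := (([], []), 0).

Definition Good (V : list form -> list form -> Prop) (st : state) (r : rule) (ps : list state) : Prop :=
  rule_inst false (fst st) r (map fst ps) /\ length ps = arity r /\
  forall i, i < length ps ->
    IN V (snd (nth i ps dflt)) (fst (fst (nth i ps dflt))) (snd (fst (nth i ps dflt))) /\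
    (~ (r = RBox /\ i = 1) -> snd (nth i ps dflt) < snd st).

Section GfpToTree.
Variable V : list form -> list form -> Prop.
Hypothesis hV : forall G D, V G D -> I V G D.

Lemma good_ex n G D : IN V n G D -> exists r ps, Good V ((G, D), n) r ps.
Proof.
  intro h. destruct h as [n G D p G0 D0 h1 h2 | n G D G0 h1 | n m1 m2 G D A B G0 h1 l1 l2 d1 d2
    | n m G D A B D0 h1 l1 d1 | n m G D B G0 h1 l1 d1 | n m G D Pi A G0 D0 h1 h2 l1 d1 hv].
  - exists RInit, []. split; [|split]; simpl; auto.
    + split; auto. left. exists p, G0, D0; auto.
    + intros; lia.
  - exists RInit, []. split; [|split]; simpl; auto.
    + split; auto. right. exists G0; auto.
    + intros; lia.
  - exists RImpL, [((B :: G0, D), m1); ((G0, A :: D), m2)]. split; [|split]; simpl; auto.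
    + exists A, B, G0; auto.
    + intros i hi. destruct i as [|[|i]]; simpl; auto; lia.
  - exists RImpR, [((A :: G, B :: D0), m)]. split; [|split]; simpl; auto.
    + exists A, B, D0; auto.
    + intros i hi. destruct i as [|i]; simpl; auto; lia.
  - exists RRefl, [((B :: Box B :: G0, D), m)]. split; [|split]; simpl; auto.
    + exists B, G0; auto.
    + intros i hi. destruct i as [|i]; simpl; auto; lia.
  - destruct (I_IN V _ _ (hV _ _ hv)) as [m' h'].
    exists RBox, [((G, A :: D0), m); ((map Box Pi, [A]), m')]. split; [|split]; simpl; auto.
    + exists Pi, A, G0, D0; auto.
    + intros i hi. destruct i as [|[|i]]; simpl; auto; try lia.
      split; auto. intro hn; exfalso; apply hn; auto.
Qed.

Definition chooseR (st : state) : rule * list state :=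
  epsilon (inhabits (RInit, [])) (fun rp => Good V st (fst rp) (snd rp)).

Lemma chooseR_spec st : IN V (snd st) (fst (fst st)) (snd (fst st)) ->
  Good V st (fst (chooseR st)) (snd (chooseR st)).
Proof.
  intro h. destruct st as [[G D] n]. unfold chooseR.
  apply (epsilon_spec (inhabits (RInit, [])) (fun rp => Good V ((G, D), n) (fst rp) (snd rp))).
  destruct (good_ex n G D h) as (r & ps & g). exists (r, ps). exact g.
Qed.

Variable root : state.
Hypothesis hroot : IN V (snd root) (fst (fst root)) (snd (fst root)).

Fixpoint st (w : list nat) : state :=
  match w with [] => root | i :: w' => nth i (snd (chooseR (st w'))) dflt end.

Definition Tr : ptree := fun w => (fst (st w), fst (chooseR (st w))).

Lemma inv_st w : in_tree Tr w -> IN V (snd (st w)) (fst (fst (st w))) (snd (fst (st w))).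
Proof.
  induction 1.
  - exact hroot.
  - destruct (chooseR_spec _ IHin_tree) as (g1 & g2 & g3).
    unfold Tr in H0. simpl in H0. rewrite <- g2 in H0.
    simpl. apply (g3 i H0).
Qed.

Lemma map_nth_seq_fst (l : list state) : map (fun i => fst (nth i l dflt)) (seq 0 (length l)) = map fst l.
Proof.
  induction l as [|a l IH]; [reflexivity|]. simpl. f_equal.
  rewrite <- seq_shift, map_map. exact IH.
Qed.

Lemma Tr_lc : locally_correct false Tr.
Proof.
  intros w hw. pose proof (chooseR_spec _ (inv_st w hw)) as (g1 & g2 & g3).
  unfold Tr at 1 2. simpl. rewrite <- g2.
  rewrite map_nth_seq_fst. exact g1.
Qed.

Lemma Tr_prog : progressing Tr.
Proof.
  intros fb hin n. apply NNPP. intro hn.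
  assert (dec : forall m, n <= m -> snd (st (branch fb (S m))) < snd (st (branch fb m))).
  { intros m hm. pose proof (chooseR_spec _ (inv_st _ (hin m))) as (g1 & g2 & g3).
    pose proof (in_tree_lt _ _ _ (hin (S m))) as hl.
    change (fb m < arity (fst (chooseR (st (branch fb m))))) in hl.
    rewrite <- g2 in hl. destruct (g3 _ hl) as [_ hlt].
    simpl. apply hlt. intros [e1 e2]. apply hn. exists m. split; auto. }
  assert (hk : forall k, snd (st (branch fb (n + k))) + k <= snd (st (branch fb n))).
  { induction k. replace (n + 0) with n by lia; lia.
    pose proof (dec (n + k) ltac:(lia)). replace (n + S k) with (S (n + k)) by lia. lia. }
  specialize (hk (S (snd (st (branch fb n))))). lia.
Qed.

End GfpToTree.

Lemma gfpI_to_tree G D : GfpI G D -> provable false (G, D).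
Proof.
  intros (Y & hY & hy). destruct (I_IN Y _ _ (hY _ _ hy)) as [n hn].
  exists (Tr Y (G, D, n)). split; [split|].
  - apply Tr_lc; auto.
  - apply Tr_prog; auto.
  - reflexivity.
Qed.

Theorem theorem6p6 : forall s : sequent, provable true s -> provable false s.
Proof.
  intros [G D] h. apply gfpI_to_tree, cut_elim, tree_to_gfpC, h.
Qed.
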